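(* Let $\mathcal{H}$ be a complex Hilbert space, let $A\in\mathcal{B}(\mathcal{H})$ be a nonzero positive operator, and let $\mathbb{A}=\begin{pmatrix}A&O\\O&A\end{pmatrix}$ on $\mathcal{H}\oplus\mathcal{H}$. Let $P,Q,R,S\in\mathcal{B}_{A^{1/2}}(\mathcal{H})$. Then $$\omega_{\mathbb{A}}\left[\begin{pmatrix}P&Q\\R&S\end{pmatrix}\right]\leq\max\{\omega_A(P),\omega_A(S)\}+\frac{\omega_A(Q+R)+\omega_A(Q-R)}{2}.$$
   Context: For a positive operator $A$ on $\mathcal{H}$, $\langle x,y\rangle_A:=\langle Ax,y\rangle$ and $\|x\|_A:=\sqrt{\langle x,x\rangle_A}$. $\mathcal{B}_{A^{1/2}}(\mathcal{H})$ is the set of $T\in\mathcal{B}(\mathcal{H})$ such that $\|Tx\|_A\le\lambda\|x\|_A$ for some $\lambda>0$ and all $x$. $\omega_A(T):=\sup\{|\langle Tx,x\rangle_A|:x\in\mathcal{H},\|x\|_A=1\}$. $\omega_{\mathbb{A}}$ is defined analogously on $\mathcal{H}\oplus\mathcal{H}$ with $\langle (x_1,x_2),(y_1,y_2)\rangle_{\mathbb{A}}=\langle x_1,y_1\rangle_A+\langle x_2,y_2\rangle_A$. *)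

(* Defs.v *)
From HB Require Import structures.
From mathcomp Require Import all_boot all_order all_algebra.
From mathcomp Require Import classical_sets reals.
From mathcomp.real_closed Require Import complex.
Set Implicit Arguments. Unset Strict Implicit. Unset Printing Implicit Defensive.
Import Order.TTheory GRing.Theory Num.Theory.
Local Open Scope ring_scope.
Local Open Scope classical_set_scope.

Section Hilbert.
Variables (R : realType) (H : lmodType R[i]).

Definition inner_product (ip : H -> H -> R[i]) : Prop :=
  [/\ forall (a : R[i]) (x y z : H), ip (a *: x + y) z = a * ip x z + ip y z,
      forall x y : H, ip y x = (ip x y)^*,
      forall x : H, 0 <= ip x x
    & forall x : H, ip x x = 0 -> x = 0].

Definition sqnorm (ip : H -> H -> R[i]) (x : H) : R := complex.Re (ip x x).

Definition ip_complete (ip : H -> H -> R[i]) : Prop :=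
  forall u : nat -> H,
    (forall e : R, 0 < e -> exists N : nat, forall m n : nat,
        (N <= m)%N -> (N <= n)%N -> sqnorm ip (u m - u n) < e) ->
    exists l : H, forall e : R, 0 < e -> exists N : nat, forall n : nat,
        (N <= n)%N -> sqnorm ip (u n - l) < e.

Definition hilbert_space (ip : H -> H -> R[i]) : Prop :=
  inner_product ip /\ ip_complete ip.

Definition bounded_op (ip : H -> H -> R[i]) (T : H -> H) : Prop :=
  (forall (a : R[i]) (x y : H), T (a *: x + y) = a *: T x + T y) /\
  exists M : R, forall x : H, sqnorm ip (T x) <= M ^+ 2 * sqnorm ip x.

Definition positive_op (ip : H -> H -> R[i]) (A : H -> H) : Prop :=
  bounded_op ip A /\ forall x : H, 0 <= ip (A x) x.

Definition ipA (ip : H -> H -> R[i]) (A : H -> H) (x y : H) : R[i] := ip (A x) y.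

Definition BA_half (ip : H -> H -> R[i]) (A : H -> H) (T : H -> H) : Prop :=
  bounded_op ip T /\
  exists lambda : R, 0 < lambda /\
    forall x : H, complex.Re (ipA ip A (T x) (T x)) <= lambda ^+ 2 * complex.Re (ipA ip A x x).

(* the semi-inner product on H (+) H induced by the diagonal operator [[A,0],[0,A]] *)
Definition ipAA (ip : H -> H -> R[i]) (A : H -> H) (x y : H * H) : R[i] :=
  ipA ip A x.1 y.1 + ipA ip A x.2 y.2.

Definition opmatrix (P Q R' S : H -> H) (x : H * H) : H * H :=
  (P x.1 + Q x.2, R' x.1 + S x.2).

End Hilbert.

Definition omega (R : realType) (V : Type) (sip : V -> V -> R[i]) (T : V -> V) : R :=
  sup [set Normc.normc (sip (T x) x) | x in [set x | sip x x = 1]].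

(* Main.v *)
Require Import Defs.
From HB Require Import structures.
From mathcomp Require Import all_boot all_order all_algebra.
From mathcomp Require Import classical_sets boolp reals.
From mathcomp.real_closed Require Import complex.
From mathcomp Require Import ring lra.
Import Order.TTheory GRing.Theory Num.Theory.
Local Open Scope complex_scope.
Local Open Scope ring_scope.

Lemma ReD {K : realType} (a b : K[i]) : complex.Re (a + b) = complex.Re a + complex.Re b.
Proof. by case: a => a1 a2; case: b => b1 b2. Qed.

Lemma ReB {K : realType} (a b : K[i]) : complex.Re (a - b) = complex.Re a - complex.Re b.
Proof. by case: a => a1 a2; case: b => b1 b2. Qed.

Lemma ge0_real {K : realType} {z : K[i]} : 0 <= z -> z = (complex.Re z)%:C.
Proof. by case: z => a b; rewrite lecE /= => /andP[/eqP -> _]. Qed.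

Lemma normc_ge0 {K : realType} (z : K[i]) : 0 <= Normc.normc z.
Proof. by case: z => a b /=; rewrite sqrtr_ge0. Qed.

Lemma normc_real {K : realType} (k : K) : Normc.normc (k%:C) = `|k|.
Proof. by rewrite /= expr0n /= addr0 sqrtr_sqr. Qed.

Lemma ip_lin1 {K : realType} (H : lmodType K[i]) (ip : H -> H -> K[i])
  (hip : inner_product ip) a x y z : ip (a *: x + y) z = a * ip x z + ip y z.
Proof. by case: hip. Qed.

Lemma ip_lin2 {K : realType} (H : lmodType K[i]) (ip : H -> H -> K[i])
  (hip : inner_product ip) a x y z : ip z (a *: x + y) = a^* * ip z x + ip z y.
Proof.
case: hip => l s _ _; rewrite s l rmorphD rmorphM /= -!s; done.
Qed.

Definition islin {K : realType} {H : lmodType K[i]} {T : H -> H} :=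
  forall (a : K[i]) x y, T (a *: x + y) = a *: T x + T y.
Arguments islin {K H} T.

Lemma lin0 {K : realType} {H : lmodType K[i]} {T : H -> H} : islin T -> T 0 = 0.
Proof.
move=> hT; have := hT 1 0 0; rewrite !scale1r addr0.
move=> h; have : T 0 + T 0 - T 0 = T 0 - T 0 by rewrite -h.
by rewrite addrK subrr.
Qed.

Lemma linD {K : realType} {H : lmodType K[i]} {T : H -> H} : islin T -> forall x y, T (x + y) = T x + T y.
Proof. by move=> hT x y; rewrite -{1}(scale1r x) hT scale1r. Qed.

Lemma linZ {K : realType} {H : lmodType K[i]} {T : H -> H} : islin T -> forall a x, T (a *: x) = a *: T x.
Proof. by move=> hT a x; rewrite -(addr0 (a *: x)) hT lin0 // addr0. Qed.

Lemma linN {K : realType} {H : lmodType K[i]} {T : H -> H} : islin T -> forall x, T (- x) = - T x.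
Proof. by move=> hT x; rewrite -scaleN1r linZ // scaleN1r. Qed.

Lemma linB {K : realType} {H : lmodType K[i]} {T : H -> H} : islin T -> forall x y, T (x - y) = T x - T y.
Proof. by move=> hT x y; rewrite linD // linN. Qed.


Lemma ipDl {K : realType} {H : lmodType K[i]} {ip : H -> H -> K[i]} (hip : @inner_product K H ip) x y z : ip (x + y) z = ip x z + ip y z.
Proof. by rewrite -{1}(scale1r x) ip_lin1 // mul1r. Qed.
Lemma ipZl {K : realType} {H : lmodType K[i]} {ip : H -> H -> K[i]} (hip : @inner_product K H ip) a x z : ip (a *: x) z = a * ip x z.
Proof.
have h0 : ip 0 z = 0.
  have := ipDl hip 0 0 z; rewrite addr0 => h.
  have : ip 0 z + ip 0 z - ip 0 z = ip 0 z - ip 0 z by rewrite -h.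
  by rewrite addrK subrr.
by rewrite -(addr0 (a *: x)) ip_lin1 // h0 addr0.
Qed.
Lemma ipNl {K : realType} {H : lmodType K[i]} {ip : H -> H -> K[i]} (hip : @inner_product K H ip) x z : ip (- x) z = - ip x z.
Proof. by rewrite -scaleN1r ipZl // mulN1r. Qed.
Lemma ipBl {K : realType} {H : lmodType K[i]} {ip : H -> H -> K[i]} (hip : @inner_product K H ip) x y z : ip (x - y) z = ip x z - ip y z.
Proof. by rewrite ipDl // ipNl. Qed.
Lemma ipDr {K : realType} {H : lmodType K[i]} {ip : H -> H -> K[i]} (hip : @inner_product K H ip) x y z : ip z (x + y) = ip z x + ip z y.
Proof. by rewrite -{1}(scale1r x) ip_lin2 // rmorph1 mul1r. Qed.
Lemma ipZr {K : realType} {H : lmodType K[i]} {ip : H -> H -> K[i]} (hip : @inner_product K H ip) a x z : ip z (a *: x) = a^* * ip z x.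
Proof. by have [l s _ _] := hip; rewrite s ipZl // rmorphM /= -s. Qed.
Lemma ipNr {K : realType} {H : lmodType K[i]} {ip : H -> H -> K[i]} (hip : @inner_product K H ip) x z : ip z (- x) = - ip z x.
Proof. by rewrite -scaleN1r ipZr // rmorphN rmorph1 mulN1r. Qed.
Lemma ipBr {K : realType} {H : lmodType K[i]} {ip : H -> H -> K[i]} (hip : @inner_product K H ip) x y z : ip z (x - y) = ip z x - ip z y.
Proof. by rewrite ipDr // ipNr. Qed.

Notation nc := Normc.normc.

Lemma fDl {K : realType} {H : lmodType K[i]} {ip : H -> H -> K[i]} (hip : inner_product ip)
  {A : H -> H} (hA : islin A) x y z : ipA ip A (x + y) z = ipA ip A x z + ipA ip A y z.
Proof. by rewrite /ipA linD // ipDl. Qed.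
Lemma fBl {K : realType} {H : lmodType K[i]} {ip : H -> H -> K[i]} (hip : inner_product ip)
  {A : H -> H} (hA : islin A) x y z : ipA ip A (x - y) z = ipA ip A x z - ipA ip A y z.
Proof. by rewrite /ipA linB // ipBl. Qed.
Lemma fZl {K : realType} {H : lmodType K[i]} {ip : H -> H -> K[i]} (hip : inner_product ip)
  {A : H -> H} (hA : islin A) a x z : ipA ip A (a *: x) z = a * ipA ip A x z.
Proof. by rewrite /ipA linZ // ipZl. Qed.
Lemma fNl {K : realType} {H : lmodType K[i]} {ip : H -> H -> K[i]} (hip : inner_product ip)
  {A : H -> H} (hA : islin A) x z : ipA ip A (- x) z = - ipA ip A x z.
Proof. by rewrite /ipA linN // ipNl. Qed.
Lemma fNr {K : realType} {H : lmodType K[i]} {ip : H -> H -> K[i]} (hip : inner_product ip)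
  {A : H -> H} x z : ipA ip A z (- x) = - ipA ip A z x.
Proof. by rewrite /ipA ipNr. Qed.
Lemma fDr {K : realType} {H : lmodType K[i]} {ip : H -> H -> K[i]} (hip : inner_product ip)
  {A : H -> H} x y z : ipA ip A z (x + y) = ipA ip A z x + ipA ip A z y.
Proof. by rewrite /ipA ipDr. Qed.
Lemma fBr {K : realType} {H : lmodType K[i]} {ip : H -> H -> K[i]} (hip : inner_product ip)
  {A : H -> H} x y z : ipA ip A z (x - y) = ipA ip A z x - ipA ip A z y.
Proof. by rewrite /ipA ipBr. Qed.
Lemma fZr {K : realType} {H : lmodType K[i]} {ip : H -> H -> K[i]} (hip : inner_product ip)
  {A : H -> H} a x z : ipA ip A z (a *: x) = a^* * ipA ip A z x.
Proof. by rewrite /ipA ipZr. Qed.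

Lemma polar {K : realType} {H : lmodType K[i]} {ip : H -> H -> K[i]} (hip : inner_product ip)
  {A : H -> H} (hA : islin A) u v :
  ipA ip A u v *+ 4 = ipA ip A (u + v) (u + v) - ipA ip A (u - v) (u - v)
    + 'i * ipA ip A (u + 'i *: v) (u + 'i *: v) - 'i * ipA ip A (u - 'i *: v) (u - 'i *: v).
Proof.
rewrite !(fDl hip hA, fBl hip hA, fNl hip hA, fZl hip hA, fDr hip, fBr hip, fNr hip, fZr hip) conjCi.
have := @mulCii (K[i]); move: ('i : K[i]) => j hj.
ring: hj.
Qed.

Lemma parallel {K : realType} {H : lmodType K[i]} {ip : H -> H -> K[i]} (hip : inner_product ip)
  {A : H -> H} (hA : islin A) (c : K[i]) (hc : c * c^* = 1) u v :
  ipA ip A (u + c *: v) (u + c *: v) + ipA ip A (u - c *: v) (u - c *: v) =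
  (ipA ip A u u + ipA ip A v v) *+ 2.
Proof.
rewrite !(fDl hip hA, fBl hip hA, fNl hip hA, fZl hip hA, fDr hip, fBr hip, fNr hip, fZr hip).
move: hc; move: (c^*) => d hc.
ring: hc.
Qed.

Lemma norm4 {K : realType} (a b c d : K[i]) :
  0 <= a -> 0 <= b -> 0 <= c -> 0 <= d ->
  `|a - b + 'i * c - 'i * d| <= a + b + (c + d).
Proof.
move=> a0 b0 c0 d0.
apply: (le_trans (ler_normB _ _)).
rewrite normrM normCi mul1r (ger0_norm d0) addrA lerD2r.
apply: (le_trans (ler_normD _ _)).
rewrite normrM normCi mul1r (ger0_norm c0) lerD2r.
by apply: (le_trans (ler_normB _ _)); rewrite (ger0_norm a0) (ger0_norm b0).
Qed.

Lemma polar_bound {K : realType} {H : lmodType K[i]} {ip : H -> H -> K[i]} (hip : inner_product ip)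
  {A : H -> H} (hA : islin A) (hpos : forall x, 0 <= ipA ip A x x) u v :
  `|ipA ip A u v| <= ipA ip A u u + ipA ip A v v.
Proof.
have p1 := @parallel _ _ _ hip _ hA 1 _ u v.
rewrite !scale1r conjC1 mulr1 in p1; have {}p1 := p1 erefl.
have p2 := @parallel _ _ _ hip _ hA (Num.imaginary) _ u v.
rewrite conjCi mulrN mulCii opprK in p2; have {}p2 := p2 erefl.
rewrite -(ler_pMn2r (n := 4)) // -normrMn polar //.
have := @norm4 _ _ _ _ _ (hpos (u + v)) (hpos (u - v)) (hpos (u + 'i *: v)) (hpos (u - 'i *: v)).
by rewrite p1 p2 -mulrnDr.
Qed.

Lemma normE {K : realType} (z : K[i]) : `|z| = (Normc.normc z)%:C.
Proof. by []. Qed.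
Lemma conjR {K : realType} (k : K) : (k%:C)^* = k%:C :> K[i].
Proof. apply/CrealP/complex_realP; by exists k. Qed.

Lemma omega_ub {K : realType} {H : lmodType K[i]} {ip : H -> H -> K[i]} (hip : inner_product ip)
  {A : H -> H} (hA : islin A) (hpos : forall x, 0 <= ipA ip A x x)
  (T : H -> H) (M : K)
  (hl : forall x, complex.Re (ipA ip A (T x) (T x)) <= M * complex.Re (ipA ip A x x)) :
  has_ubound [set nc (ipA ip A (T x) x) | x in [set x | ipA ip A x x = 1]].
Proof.
exists (M + 1) => r [x /= hx <-].
have := polar_bound hip hA hpos (T x) x.
rewrite normE (ge0_real (hpos (T x))) hx -[1]/(1%:C) -rmorphD lecR => h.
apply: le_trans h _; rewrite lerD2r.
by apply: le_trans (hl x) _; rewrite hx /= mulr1.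
Qed.

Lemma sup_ge0 {K : realType} (E : set K) : has_ubound E -> (forall r, E r -> 0 <= r) -> 0 <= sup E.
Proof.
move=> ub h0; have [[x Ex]|ne] := pselect (E !=set0)%classic.
  exact: le_trans (h0 _ Ex) (ub_le_sup ub Ex).
have -> : E = set0.
  by apply/funext => x; apply/propext; split => // Ex; apply: ne; exists x.
by rewrite sup0.
Qed.

Lemma omega_ge0 {K : realType} {H : lmodType K[i]} {ip : H -> H -> K[i]} (hip : inner_product ip)
  {A : H -> H} (hA : islin A) (hpos : forall x, 0 <= ipA ip A x x)
  (T : H -> H) (M : K)
  (hl : forall x, complex.Re (ipA ip A (T x) (T x)) <= M * complex.Re (ipA ip A x x)) :
  0 <= omega (ipA ip A) T.
Proof.
rewrite /omega; apply: sup_ge0; first exact: (omega_ub hip hA hpos T M hl).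
by move=> r [x _ <-]; exact: normc_ge0.
Qed.

Lemma key {K : realType} {H : lmodType K[i]} {ip : H -> H -> K[i]} (hip : inner_product ip)
  {A : H -> H} (hA : islin A) (hpos : forall x, 0 <= ipA ip A x x)
  (T : H -> H) (hT : islin T) (M : K)
  (hl : forall x, complex.Re (ipA ip A (T x) (T x)) <= M * complex.Re (ipA ip A x x)) x :
  `|ipA ip A (T x) x| <= (omega (ipA ip A) T)%:C * ipA ip A x x.
Proof.
have ub := omega_ub hip hA hpos T M hl.
have hx := ge0_real (hpos x).
set c := complex.Re (ipA ip A x x) in hx.
have c0 : 0 <= c by rewrite -ler0c -hx hpos.
move: c0; rewrite le_eqVlt => /orP [/eqP c_0 | cpos].
  have hTx := ge0_real (hpos (T x)).
  have h1 := hl x; rewrite -/c -c_0 mulr0 in h1.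
  have h2 : complex.Re (ipA ip A (T x) (T x)) = 0.
    by apply/le_anti; rewrite h1 /= -ler0c -hTx hpos.
  have := polar_bound hip hA hpos (T x) x.
  rewrite hTx h2 hx -c_0 rmorph0 addr0 => h.
  by rewrite mulr0.
set s := Num.sqrt c.
have spos : 0 < s by rewrite sqrtr_gt0.
have cs : c = s * s by rewrite -expr2 sqr_sqrtr // ltW.
set y := (s^-1)%:C *: x.
have fy : ipA ip A y y = 1.
  rewrite /y fZl // fZr // conjR hx -!rmorphM /= cs.
  have -> : s^-1 * (s^-1 * (s * s)) = 1 by field; rewrite gt_eqF.
  by rewrite rmorph1.
have mem : ([set nc (ipA ip A (T x) x) | x in [set x | ipA ip A x x = 1]] (nc (ipA ip A (T y) y)))%classic.
  by exists y.
have le := ub_le_sup ub mem.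
have fTy : ipA ip A (T x) x = c%:C * ipA ip A (T y) y.
  rewrite /y linZ // fZl // fZr // conjR !mulrA -!rmorphM cs.
  have -> : s * s / s / s = 1 by field; rewrite gt_eqF.
  by rewrite rmorph1 mul1r.
rewrite fTy normrM hx (ger0_norm (_ : 0 <= c%:C)); last by rewrite ler0c ltW.
rewrite [_ * c%:C]mulrC; apply: ler_wpM2l; first by rewrite ler0c ltW.
by rewrite normE lecR.
Qed.

Lemma Re_ge0 {K : realType} {z : K[i]} : 0 <= z -> 0 <= complex.Re z.
Proof. by rewrite lecE => /andP[_ ->]. Qed.

Lemma ncD {K : realType} (u v : K[i]) : nc (u + v) <= nc u + nc v.
Proof. by rewrite -lecR rmorphD -!normE ler_normD. Qed.
Lemma ncB {K : realType} (u v : K[i]) : nc (u - v) <= nc u + nc v.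
Proof. by rewrite -lecR rmorphD -!normE ler_normB. Qed.
Lemma ncM {K : realType} (u v : K[i]) : nc (u * v) = nc u * nc v.
Proof. by apply: complexI; rewrite rmorphM -!normE normrM. Qed.
Lemma nc_i {K : realType} : nc (Num.imaginary : K[i]) = 1.
Proof. by apply: complexI; rewrite -normE normCi. Qed.
Lemma ncMn {K : realType} (u : K[i]) n : nc (u *+ n) = nc u *+ n.
Proof. by apply: complexI; rewrite rmorphMn -!normE normrMn. Qed.

Lemma keyR {K : realType} {H : lmodType K[i]} {ip : H -> H -> K[i]} (hip : inner_product ip)
  {A : H -> H} (hA : islin A) (hpos : forall x, 0 <= ipA ip A x x)
  (T : H -> H) (hT : islin T) (M : K)
  (hl : forall x, complex.Re (ipA ip A (T x) (T x)) <= M * complex.Re (ipA ip A x x)) x :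
  nc (ipA ip A (T x) x) <= omega (ipA ip A) T * complex.Re (ipA ip A x x).
Proof.
have := key hip hA hpos T hT M hl x.
by rewrite normE (ge0_real (hpos x)) -rmorphM lecR.
Qed.

Lemma par_re {K : realType} {H : lmodType K[i]} {ip : H -> H -> K[i]} (hip : inner_product ip)
  {A : H -> H} (hA : islin A) (c : K[i]) (hc : c * c^* = 1) u v :
  complex.Re (ipA ip A (u + c *: v) (u + c *: v)) + complex.Re (ipA ip A (u - c *: v) (u - c *: v)) =
  (complex.Re (ipA ip A u u) + complex.Re (ipA ip A v v)) *+ 2.
Proof. by rewrite -ReD parallel // !mulr2n !ReD. Qed.

Lemma sum_bound {K : realType} {H : lmodType K[i]} {ip : H -> H -> K[i]} (hip : inner_product ip)
  {A : H -> H} (hA : islin A) (hpos : forall x, 0 <= ipA ip A x x)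
  (T1 T2 : H -> H) (M1 M2 : K)
  (h1 : forall x, complex.Re (ipA ip A (T1 x) (T1 x)) <= M1 * complex.Re (ipA ip A x x))
  (h2 : forall x, complex.Re (ipA ip A (T2 x) (T2 x)) <= M2 * complex.Re (ipA ip A x x)) :
  (forall x, complex.Re (ipA ip A (T1 x + T2 x) (T1 x + T2 x)) <= ((M1 + M2) *+ 2) * complex.Re (ipA ip A x x)) /\
  (forall x, complex.Re (ipA ip A (T1 x - T2 x) (T1 x - T2 x)) <= ((M1 + M2) *+ 2) * complex.Re (ipA ip A x x)).
Proof.
have hc : (1 : K[i]) * 1^* = 1 by rewrite conjC1 mulr1.
split => x; have := par_re hip hA 1 hc (T1 x) (T2 x); rewrite !scale1r => e;
  have := Re_ge0 (hpos (T1 x + T2 x)); have := Re_ge0 (hpos (T1 x - T2 x));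
  have := h1 x; have := h2 x;
  rewrite mulrnAl mulrDl;
  set a := complex.Re (ipA ip A (T1 x + T2 x) _) in e *;
  set b := complex.Re (ipA ip A (T1 x - T2 x) _) in e *;
  set p := M1 * _; set q := M2 * _; set r1 := complex.Re (ipA ip A (T1 x) _) in e *;
  set r2 := complex.Re (ipA ip A (T2 x) _) in e *; lra.
Qed.

Lemma lin_add {K : realType} {H : lmodType K[i]} (T1 T2 : H -> H) :
  islin T1 -> islin T2 -> islin (fun x => T1 x + T2 x).
Proof. by move=> h1 h2 a x y; rewrite h1 h2 scalerDr addrACA. Qed.
Lemma lin_sub {K : realType} {H : lmodType K[i]} (T1 T2 : H -> H) :
  islin T1 -> islin T2 -> islin (fun x => T1 x - T2 x).
Proof. by move=> h1 h2 a x y; rewrite h1 h2 scalerBr opprD addrACA. Qed.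

Theorem theorem2p7 (K : realType) (H : lmodType K[i]) (ip : H -> H -> K[i])
  (hH : hilbert_space ip) (A : H -> H) (hA : positive_op ip A)
  (hA0 : exists x : H, A x <> 0)
  (P Q R S : H -> H)
  (hP : BA_half ip A P) (hQ : BA_half ip A Q)
  (hR : BA_half ip A R) (hS : BA_half ip A S) :
  omega (ipAA ip A) (opmatrix P Q R S)
  <= Num.max (omega (ipA ip A) P) (omega (ipA ip A) S)
     + (omega (ipA ip A) (fun x => Q x + R x)
        + omega (ipA ip A) (fun x => Q x - R x)) / 2.
Proof.
have hip := hH.1.
have hAl : islin A := hA.1.1.
have hpos : forall x, 0 <= ipA ip A x x := hA.2.
case: hP => [[hPl _] [lP [_ hPb]]].
case: hQ => [[hQl _] [lQ [_ hQb]]].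
case: hR => [[hRl _] [lR [_ hRb]]].
case: hS => [[hSl _] [lS [_ hSb]]].
have [hFb hGb] := sum_bound hip hAl hpos Q R _ _ hQb hRb.
have hFl := @lin_add _ _ Q R hQl hRl.
have hGl := @lin_sub _ _ Q R hQl hRl.
have wP0 := omega_ge0 hip hAl hpos P _ hPb.
have wS0 := omega_ge0 hip hAl hpos S _ hSb.
have wF0 := omega_ge0 hip hAl hpos _ _ hFb.
have wG0 := omega_ge0 hip hAl hpos _ _ hGb.
have hPm : omega (ipA ip A) P <= Num.max (omega (ipA ip A) P) (omega (ipA ip A) S).
  by rewrite le_max lexx.
have hSm : omega (ipA ip A) S <= Num.max (omega (ipA ip A) P) (omega (ipA ip A) S).
  by rewrite le_max lexx orbT.
rewrite {1}/omega.
set E := (X in sup X).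
have [ne|e0] := pselect (E !=set0)%classic; last first.
  have -> : E = set0.
    by apply/funext => x; apply/propext; split => // Ex; apply: e0; exists x.
  rewrite sup0.
  set m := Num.max _ _ in hPm hSm *.
  set wF := omega _ (fun x => Q x + R x) in wF0 *.
  set wG := omega _ (fun x => Q x - R x) in wG0 *.
  lra.
apply: ge_sup => // r [[x1 x2] /= hx <-].
rewrite /ipAA /= in hx.
rewrite /ipAA /opmatrix /= !(fDl hip hAl).
have eW : forall a b c d : K[i], a + b + (c + d) = (a + d) + (b + c).
  by move=> a b c d; ring.
rewrite eW.
have hoff : (ipA ip A (Q x2) x1 + ipA ip A (R x1) x2) *+ 4 =
  ipA ip A (Q (x1 + x2) + R (x1 + x2)) (x1 + x2)
  - ipA ip A (Q (x1 - x2) + R (x1 - x2)) (x1 - x2)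
  - Num.imaginary * (ipA ip A (Q (x1 + Num.imaginary *: x2) - R (x1 + Num.imaginary *: x2)) (x1 + Num.imaginary *: x2)
     - ipA ip A (Q (x1 - Num.imaginary *: x2) - R (x1 - Num.imaginary *: x2)) (x1 - Num.imaginary *: x2)).
  rewrite !(linD hQl, linD hRl, linB hQl, linB hRl, linZ hQl, linZ hRl, linN hQl, linN hRl).
  rewrite !(fDl hip hAl, fBl hip hAl, fNl hip hAl, fZl hip hAl, fDr hip, fBr hip, fNr hip, fZr hip) conjCi.
  have := @mulCii (K[i]); move: (Num.imaginary : K[i]) => j hj.
  ring: hj.
have off4 : nc (ipA ip A (Q x2) x1 + ipA ip A (R x1) x2) *+ 4 <=
  nc (ipA ip A (Q (x1 + x2) + R (x1 + x2)) (x1 + x2))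
  + nc (ipA ip A (Q (x1 - x2) + R (x1 - x2)) (x1 - x2))
  + (nc (ipA ip A (Q (x1 + Num.imaginary *: x2) - R (x1 + Num.imaginary *: x2)) (x1 + Num.imaginary *: x2))
     + nc (ipA ip A (Q (x1 - Num.imaginary *: x2) - R (x1 - Num.imaginary *: x2)) (x1 - Num.imaginary *: x2))).
  rewrite -ncMn hoff; apply: le_trans (ncB _ _) _; rewrite ncM nc_i mul1r.
  by apply: lerD; exact: ncB.
have kF1 := keyR hip hAl hpos _ hFl _ hFb (x1 + x2).
have kF2 := keyR hip hAl hpos _ hFl _ hFb (x1 - x2).
have kG1 := keyR hip hAl hpos _ hGl _ hGb (x1 + Num.imaginary *: x2).
have kG2 := keyR hip hAl hpos _ hGl _ hGb (x1 - Num.imaginary *: x2).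
have kP := keyR hip hAl hpos _ hPl _ hPb x1.
have kS := keyR hip hAl hpos _ hSl _ hSb x2.
simpl in kF1, kF2, kG1, kG2.
have hab : complex.Re (ipA ip A x1 x1) + complex.Re (ipA ip A x2 x2) = 1.
  by rewrite -ReD hx.
have hc1 : (1 : K[i]) * 1^* = 1 by rewrite conjC1 mulr1.
have hci : (Num.imaginary : K[i]) * Num.imaginary^* = 1.
  by rewrite conjCi mulrN mulCii opprK.
have par1 := par_re hip hAl 1 hc1 x1 x2.
rewrite !scale1r in par1.
have par2 := par_re hip hAl _ hci x1 x2.
have a0 := Re_ge0 (hpos x1).
have b0 := Re_ge0 (hpos x2).
have t1 := ncD (ipA ip A (P x1) x1 + ipA ip A (S x2) x2) (ipA ip A (Q x2) x1 + ipA ip A (R x1) x2).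
have t2 := ncD (ipA ip A (P x1) x1) (ipA ip A (S x2) x2).
set m := Num.max _ _ in hPm hSm *.
set wF := omega _ (fun x => Q x + R x) in wF0 kF1 kF2 *.
set wG := omega _ (fun x => Q x - R x) in wG0 kG1 kG2 *.
set wP := omega _ P in wP0 hPm kP *.
set wS := omega _ S in wS0 hSm kS *.
set a := complex.Re (ipA ip A x1 x1) in hab a0 kP par1 par2 *.
set b := complex.Re (ipA ip A x2 x2) in hab b0 kS par1 par2 *.
have eF : wF * complex.Re (ipA ip A (x1 + x2) (x1 + x2)) + wF * complex.Re (ipA ip A (x1 - x2) (x1 - x2)) = wF *+ 2.
  by rewrite -mulrDr par1 hab mulrnAr mulr1.
have eG : wG * complex.Re (ipA ip A (x1 + Num.imaginary *: x2) (x1 + Num.imaginary *: x2))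
  + wG * complex.Re (ipA ip A (x1 - Num.imaginary *: x2) (x1 - Num.imaginary *: x2)) = wG *+ 2.
  by rewrite -mulrDr par2 hab mulrnAr mulr1.
have pa : wP * a <= m * a by rewrite ler_wpM2r.
have sb : wS * b <= m * b by rewrite ler_wpM2r.
have mab : m * a + m * b = m by rewrite -mulrDr hab mulr1.
lra.
Qed.
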